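(* Let $\Phi:\mathcal G^m_{[n]}\to(\mathbb R^m)^n$ be a vector-valued Shapley operator. Then for every $k\in[m]$ and every $i\in[n]$, the $k$-th coordinate $\pi_k(\Phi_i(v))$ depends only on the scalar game $\pi_k\circ v$. Equivalently, there exists a scalar value operator $\phi=(\phi_1,\dots,\phi_n):\mathcal G_{[n]}\to\mathbb R^n$ (the same for all $k$) such that for all $v\in\mathcal G^m_{[n]}$ and all $i\in[n]$, $$\Phi_i(v)=\big(\phi_i(\pi_1\circ v),\dots,\phi_i(\pi_m\circ v)\big).$$
   Context: Let $n,m\in\mathbb N$, $[n]=\{1,\dots,n\}$ and $\mathcal P([n])$ its power set. Let $\mathcal G_{[n]}=\{v:\mathcal P([n])\to\mathbb R:\ v(\varnothing)=0\}$ and $\mathcal G^m_{[n]}=\{v:\mathcal P([n])\to\mathbb R^m:\ v(\varnothing)=0\}$, real vector spaces under pointwise operations (elements are called games). For $k\in[m]$, $\pi_k:\mathbb R^m\to\mathbb R$ denotes the $k$-th coordinate projection. A scalar value operator is a map $\mathcal G_{[n]}\to\mathbb R^n$. A vector-valued value operator is a map $\Phi:\mathcal G^m_{[n]}\to(\mathbb R^m)^n$, $v\mapsto(\Phi_1(v),\dots,\Phi_n(v))$. It is called a vector-valued Shapley operator if, for all games (equalities in $\mathbb R^m$): (i) Efficiency: $\sum_{i=1}^n\Phi_i(v)=v([n])$; (ii) Symmetry: if $i\neq j$ and $v(S\cup\{i\})=v(S\cup\{j\})$ for all $S\subseteq[n]\setminus\{i,j\}$, then $\Phi_i(v)=\Phi_j(v)$;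 (iii) Dummy: if $v(S\cup\{i\})=v(S)$ for all $S\subseteq[n]\setminus\{i\}$, then $\Phi_i(v)=0$; (iv) Additivity: $\Phi(\alpha v+\beta w)=\alpha\Phi(v)+\beta\Phi(w)$ for all $v,w\in\mathcal G^m_{[n]}$, $\alpha,\beta\in\mathbb R$. For $m=1$ these are the scalar Shapley axioms for a scalar value operator. *)

(* Defs.v *)
From HB Require Import structures.
From mathcomp Require Import all_boot all_order all_algebra.
From Stdlib Require Import Rdefinitions.
From mathcomp Require Import Rstruct.
Set Implicit Arguments. Unset Strict Implicit. Unset Printing Implicit Defensive.
Import Order.TTheory GRing.Theory Num.Theory.
Local Open Scope ring_scope.

(* Players [n] are 'I_n; coalitions are {set 'I_n}.
   A vector game with m coordinates is v : {set 'I_n} -> 'I_m -> R with v set0 = 0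
   (coordinate k of v(S) is v S k). *)
Definition vfun (n m : nat) := {set 'I_n} -> 'I_m -> R.

Definition is_vgame (n m : nat) (v : vfun n m) : Prop := forall k, v set0 k = 0.

(* A vector-valued value operator: Phi v i k = k-th coordinate of Phi_i(v).
   Only its values on games (is_vgame) are relevant. *)
Definition vop (n m : nat) := vfun n m -> 'I_n -> 'I_m -> R.

Definition sop (n : nat) := ({set 'I_n} -> R) -> 'I_n -> R.

Definition efficiency n m (Phi : vop n m) : Prop :=
  forall v, is_vgame v -> forall k, \sum_(i < n) Phi v i k = v setT k.

Definition symmetric_players n m (v : vfun n m) (i j : 'I_n) : Prop :=
  forall S : {set 'I_n}, i \notin S -> j \notin S -> v (i |: S) = v (j |: S).

Definition symmetry n m (Phi : vop n m) : Prop :=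
  forall v, is_vgame v -> forall i j : 'I_n, i != j ->
    symmetric_players v i j -> Phi v i = Phi v j.

Definition dummy_player n m (v : vfun n m) (i : 'I_n) : Prop :=
  forall S : {set 'I_n}, i \notin S -> v (i |: S) = v S.

Definition dummy n m (Phi : vop n m) : Prop :=
  forall v, is_vgame v -> forall i, dummy_player v i -> forall k, Phi v i k = 0.

Definition additivity n m (Phi : vop n m) : Prop :=
  forall (v w : vfun n m) (a b : R), is_vgame v -> is_vgame w ->
    Phi (fun S k => a * v S k + b * w S k) =
    (fun i k => a * Phi v i k + b * Phi w i k).

Definition vector_shapley n m (Phi : vop n m) : Prop :=
  [/\ efficiency Phi, symmetry Phi, dummy Phi & additivity Phi].

(* Main.v *)
Require Import Defs.
From HB Require Import structures.
From mathcomp Require Import all_boot all_order all_algebra.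
From Stdlib Require Import Rdefinitions.
From mathcomp Require Import Rstruct.
From Stdlib Require Import FunctionalExtensionality.
From mathcomp Require Import zify.
Set Implicit Arguments. Unset Strict Implicit. Unset Printing Implicit Defensive.
Import Order.TTheory GRing.Theory Num.Theory.
Local Open Scope ring_scope.

Definition unan n m (S : {set 'I_n}) (c : 'I_m -> R) : vfun n m :=
  fun T l => if S \subset T then c l else 0.
Definition subu n m (v : vfun n m) (S : {set 'I_n}) : vfun n m :=
  fun T l => v T l - unan S (v S) T l.

Lemma unan_game n m (S : {set 'I_n}) (c : 'I_m -> R) : S != set0 -> is_vgame (unan S c).
Proof. by move=> HS k; rewrite /unan subset0 (negbTE HS). Qed.

Lemma subu_game n m (v : vfun n m) S : is_vgame v -> S != set0 -> is_vgame (subu v S).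
Proof. by move=> gv HS k; rewrite /subu unan_game // gv subr0. Qed.

Lemma induction_games n m (G : vfun n m -> Prop) :
  (forall v, is_vgame v -> (forall T l, v T l = 0) -> G v) ->
  (forall v S, is_vgame v -> S != set0 -> G (subu v S) -> G v) ->
  forall v, is_vgame v -> G v.
Proof.
move=> Hb Hs.
suff H: forall (d : nat) (v : vfun n m), is_vgame v ->
    (forall T : {set 'I_n}, (#|T| < n.+1 - d)%nat -> forall l, v T l = 0) -> G v.
  by move=> v gv; apply: (H n.+1 v gv) => T; rewrite subnn ltn0.
elim=> [|d IHd] v gv.
  move=> Hlow; apply: Hb => // T l; apply: Hlow; rewrite subn0 ltnS.
  by rewrite -[n in (_ <= n)%nat]card_ord max_card.
set s := (n.+1 - d.+1)%nat => Hlow.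
suff H2: forall (t : nat) (w : vfun n m), is_vgame w ->
    (forall T : {set 'I_n}, (#|T| < s)%nat -> forall l, w T l = 0) ->
    (#|[set T : {set 'I_n} | (#|T| == s) && [exists l, w T l != (0:R)]]| <= t)%nat -> G w.
  by apply: (H2 _ v gv Hlow (leqnn _)).
elim=> [|t IHt] w gw Hw Ht.
  apply: IHd => // T HT l.
  have [HTs|HTs] := ltnP #|T| s; first exact: Hw.
  have eTs : #|T| = s.
    apply/eqP; move: HT HTs; rewrite /s; lia.
  move: Ht; rewrite leqn0 cards_eq0 => /eqP X0.
  have : T \notin [set T : {set 'I_n} | (#|T| == s) && [exists l, w T l != (0:R)]].
    by rewrite X0 in_set0.
  rewrite in_set eTs eqxx /= => /existsPn/(_ l); rewrite negbK => /eqP.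
  done.
set X := [set T : {set 'I_n} | (#|T| == s) && [exists l, w T l != (0:R)]] in Ht.
have [X0|[S HS]] := set_0Vmem X.
  by apply: IHt => //; rewrite -/X X0 cards0.
have HS' := HS; rewrite in_set in HS'; case/andP: HS' => /eqP cS /existsP [l0 Hl0].
have S0 : S != set0.
  by apply/eqP => S0; rewrite S0 gw eqxx in Hl0.
apply: (Hs w S gw S0); apply: IHt.
- exact: subu_game.
- move=> T HT l; rewrite /subu /unan Hw //.
  case: ifP => [sST|]; last by rewrite subr0.
  by have := subset_leq_card sST; rewrite cS leqNgt HT.
- set X' := [set T : {set 'I_n} | _ && _].
  have sub : X' \subset X :\ S.
    apply/subsetP => T; rewrite !in_set => /andP [/eqP cT /existsP [l Hl]].
    move: Hl; rewrite /subu /unan.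
    case: ifP => [sST|nST].
      have := subset_leqif_cards sST; rewrite cS cT => -[_].
      rewrite eqxx => /esym/eqP ->.
      by rewrite subrr eqxx.
    rewrite subr0 => Hl.
    rewrite cT eqxx /=; apply/andP; split; last by apply/existsP; exists l.
    by rewrite in_set1; apply/eqP => eTS; rewrite eTS subxx in nST.
  have := subset_leq_card sub; move: Ht; rewrite (cardsD1 S X) HS /=.
  move=> a b; rewrite -ltnS; exact: leq_ltn_trans b a.
Qed.

Lemma add_lem n m (Phi : vop n m) (v1 v2 : vfun n m) i k :
  additivity Phi -> is_vgame v1 -> is_vgame v2 ->
  Phi (fun S l => v1 S l + v2 S l) i k = Phi v1 i k + Phi v2 i k.
Proof.
move=> HA g1 g2; have := HA v1 v2 1 1 g1 g2.
have -> : (fun S l => 1 * v1 S l + 1 * v2 S l) = (fun S l => v1 S l + v2 S l).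
  by apply: functional_extensionality => S; apply: functional_extensionality => l; rewrite !mul1r.
by move=> ->; rewrite !mul1r.
Qed.

Lemma zero_lem n m (Phi : vop n m) (v : vfun n m) i k :
  additivity Phi -> (forall T l, v T l = 0) -> Phi v i k = 0.
Proof.
move=> HA H0.
have gv : is_vgame v by move=> l; rewrite H0.
have := HA v v 0 0 gv gv.
have -> : (fun S l => 0 * v S l + 0 * v S l) = v.
  by apply: functional_extensionality => S; apply: functional_extensionality => l; rewrite !mul0r addr0 H0.
by move=> ->; rewrite !mul0r addr0.
Qed.

Lemma decomp n m (Phi : vop n m) (v : vfun n m) S i k :
  additivity Phi -> is_vgame v -> S != set0 ->
  Phi v i k = Phi (subu v S) i k + Phi (unan S (v S)) i k.
Proof.
move=> HA gv S0; rewrite -add_lem //; last exact: unan_game; last exact: subu_game.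
congr (Phi _ i k).
by apply: functional_extensionality => T; apply: functional_extensionality => l; rewrite /subu subrK.
Qed.

Lemma unan_val n m (Phi : vop n m) (S : {set 'I_n}) (c : 'I_m -> R) i k :
  vector_shapley Phi -> S != set0 ->
  Phi (unan S c) i k = if i \in S then c k / #|S|%:R else 0.
Proof.
case=> HE HS HD HA S0.
have gu := unan_game c S0.
case: ifP => iS; last first.
  apply: HD => // T iT; rewrite /unan.
  have -> : (S \subset i |: T) = (S \subset T) => //.
  apply/subsetP/subsetP => H x xS.
    by have := H x xS; rewrite in_setU1 => /orP [/eqP xi|//]; rewrite xi iS in xS.
  by rewrite in_setU1 H ?orbT.
have Heq : forall j, j \in S -> Phi (unan S c) j = Phi (unan S c) i.
  move=> j jS; have [->//|ji] := eqVneq j i.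
  apply: HS => // T jT iT; rewrite /unan.
  have -> : (S \subset j |: T) = false.
    by apply/negP => /subsetP/(_ i iS); rewrite in_setU1 (negbTE iT) orbF eq_sym (negbTE ji).
  have -> : (S \subset i |: T) = false => //.
  by apply/negP => /subsetP/(_ j jS); rewrite in_setU1 (negbTE jT) orbF (negbTE ji).
have := HE _ gu k.
rewrite (bigID (fun j => j \in S)) /=.
rewrite [X in _ + X = _]big1 ?addr0; last first.
  move=> j /negbTE jS; apply: HD => // T jT; rewrite /unan.
  have -> : (S \subset j |: T) = (S \subset T) => //.
  apply/subsetP/subsetP => H x xS.
    by have := H x xS; rewrite in_setU1 => /orP [/eqP xi|//]; rewrite xi jS in xS.
  by rewrite in_setU1 H ?orbT.
rewrite (eq_bigr (fun _ => Phi (unan S c) i k)); last by move=> j jS; rewrite Heq.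
rewrite sumr_const /unan subsetT => <-.
have cS : #|S|%:R != 0 :> R by rewrite pnatr_eq0 -lt0n card_gt0.
by rewrite -(mulr_natr (Phi _ i k)) mulfK.
Qed.

Lemma Zlem n m (Phi : vop n m) : vector_shapley Phi ->
  forall v, is_vgame v -> forall k, (forall T, v T k = 0) -> forall i, Phi v i k = 0.
Proof.
move=> VS; have [_ _ _ HA] := VS.
apply: induction_games.
  by move=> v gv H0 k _ i; apply: zero_lem.
move=> v S gv S0 IH k Hk i.
rewrite (@decomp _ _ _ _ _ i k HA gv S0) IH; last first.
  by move=> T; rewrite /subu /unan Hk; case: ifP => _; rewrite ?Hk subrr.
by rewrite (unan_val (Phi:=Phi) _ _ _ VS S0) Hk mul0r if_same add0r.
Qed.

Lemma Qlem n m (Phi : vop n m) : vector_shapley Phi ->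
  forall v, is_vgame v -> forall v' k k', is_vgame v' ->
  (forall T, v T k = v' T k') -> forall i, Phi v i k = Phi v' i k'.
Proof.
move=> VS; have [_ _ _ HA] := VS.
apply: induction_games.
  move=> v gv H0 v' k k' gv' H i; rewrite zero_lem // (Zlem VS gv') // => T.
  by rewrite -H H0.
move=> v S gv S0 IH v' k k' gv' H i.
rewrite (@decomp _ _ _ _ _ i k HA gv S0) (@decomp _ _ _ _ _ i k' HA gv' S0).
rewrite (IH (subu v' S) k k'); first last.
- by move=> T; rewrite /subu /unan !H.
- exact: subu_game.
by rewrite (unan_val (v S) i k VS S0) (unan_val (v' S) i k' VS S0) H.
Qed.

Theorem mainTheorem1 (n m : nat) (Phi : vop n m) :
  vector_shapley Phi ->
  exists phi : sop n,
    forall v : vfun n m, is_vgame v ->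
      forall (i : 'I_n) (k : 'I_m), Phi v i k = phi (fun S => v S k) i.
Proof.
move=> VS; case: m Phi VS => [|m] Phi VS.
  by exists (fun _ _ => 0) => v _ i [].
exists (fun w i => Phi (fun S (l : 'I_m.+1) => w S) i ord0) => v gv i k.
apply: (Qlem VS gv) => // l; exact: gv.
Qed.
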